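(* Let $\mu\in\mathbb R\setminus\{0\}$ and $r=\frac{\mu}{e^{\mu}-1}$. Then for all $x\in[0,1]$, $$1-e^{-\mu x}\le\left(1-e^{-\mu}\right)x^{r}.$$
   Context: Here $x^r$ at $x=0$ is interpreted as $0$ (note $r>0$). *)

(* Defs.v *)
From Stdlib Require Import Reals.
Open Scope R_scope.

Definition rpow (x r : R) : R := if Rle_dec x 0 then 0 else Rpower x r.

(* Main.v *)
Require Import Defs.
From Stdlib Require Import Reals Lra Psatz.
From Coquelicot Require Import Coquelicot.
Open Scope R_scope.

Lemma key_conv (m x : R) : 0 <= x <= 1 -> exp (m * x) - 1 <= x * (exp m - 1).
Proof.
  intros [h0 h1].
  pose proof (exp_ineq1_le (- (m*x))) as A.
  pose proof (exp_ineq1_le (m*(1-x))) as B.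
  assert (E1 : exp (m*x) * exp (-(m*x)) = 1).
  { rewrite <- exp_plus. replace (m*x + - (m*x)) with 0 by ring. apply exp_0. }
  assert (E2 : exp (m*x) * exp (m*(1-x)) = exp m).
  { rewrite <- exp_plus. f_equal; ring. }
  pose proof (exp_pos (m*x)) as P.
  assert (C1 : exp (m*x) * (1 - m*x) <= 1).
  { rewrite <- E1. apply Rmult_le_compat_l; lra. }
  assert (C2 : exp (m*x) * (1 + m*(1-x)) <= exp m).
  { rewrite <- E2. apply Rmult_le_compat_l; lra. }
  nra.
Qed.

Lemma r_pos (m : R) : m <> 0 -> 0 < m / (exp m - 1).
Proof.
  intros hm. destruct (Rlt_or_le 0 m) as [h|h].
  - assert (1 < exp m) by (rewrite <- exp_0; apply exp_increasing; lra).
    apply Rdiv_lt_0_compat; lra.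
  - assert (m < 0) by lra.
    assert (exp m < 1) by (rewrite <- exp_0; apply exp_increasing; lra).
    replace (m / (exp m - 1)) with ((-m) / (1 - exp m)) by (field; lra).
    apply Rdiv_lt_0_compat; lra.
Qed.

Lemma deriv_nonneg (m c : R) : m <> 0 -> 0 < c <= 1 ->
  0 <= m * c * exp (- m * c) - m / (exp m - 1) * (1 - exp (- m * c)).
Proof.
  intros hm hc.
  assert (hne : exp m - 1 <> 0).
  { intro H. assert (exp m = exp 0) by (rewrite exp_0; lra).
    apply exp_inv in H0. lra. }
  pose proof (key_conv m c ltac:(lra)) as K.
  pose proof (r_pos m hm) as R.
  assert (E1 : exp (m*c) * exp (-m*c) = 1).
  { rewrite <- exp_plus. replace (m*c + - m*c) with 0 by ring. apply exp_0. }
  replace (m * c * exp (- m * c) - m / (exp m - 1) * (1 - exp (- m * c)))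
    with (exp (- m * c) * (m / (exp m - 1)) * (c * (exp m - 1) - (exp (m*c) - 1))).
  2:{ assert (Ep : exp (-m*c) <> 0) by (pose proof (exp_pos (-m*c)); lra).
      assert (E3 : exp (m*c) = / exp (-m*c)) by (apply Rmult_eq_reg_l with (exp (-m*c)); [|auto]; rewrite Rinv_r by auto; lra).
      rewrite E3. field; auto. }
  pose proof (exp_pos (-m*c)).
  apply Rmult_le_pos; [apply Rmult_le_pos|]; lra.
Qed.

Theorem mainTheorem4 (mu x : R) (hmu : mu <> 0) (hx0 : 0 <= x) (hx1 : x <= 1) :
  1 - exp (- mu * x) <= (1 - exp (- mu)) * rpow x (mu / (exp mu - 1)).
Proof.
  set (r := mu / (exp mu - 1)).
  unfold rpow.
  destruct (Rle_dec x 0) as [h|h].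
  { replace x with 0 by lra. rewrite Rmult_0_r, exp_0. lra. }
  destruct (Req_dec x 1) as [h1|h1].
  { subst x. unfold Rpower. rewrite ln_1, Rmult_0_r, exp_0, !Rmult_1_r. lra. }
  set (G := fun y => (1 - exp (- mu * y)) * exp (- r * ln y)).
  set (dG := fun y => (mu * exp (- mu * y)) * exp (- r * ln y)
                      + (1 - exp (- mu * y)) * (exp (- r * ln y) * (- r * / y))).
  assert (HD : forall y, 0 < y -> is_derive G y (dG y)).
  { intros y hy. unfold G, dG. auto_derive; [lra|]. ring. }
  assert (hmin : Rmin x 1 = x) by (apply Rmin_left; lra).
  assert (hmax : Rmax x 1 = 1) by (apply Rmax_right; lra).
  destruct (MVT_gen G x 1 dG) as [c [hc Heq]].
  { intros y hy. rewrite hmin, hmax in hy. apply HD. lra. }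
  { intros y hy. rewrite hmin, hmax in hy. apply continuity_pt_filterlim.
    apply (ex_derive_continuous G). exists (dG y). apply HD. lra. }
  rewrite hmin, hmax in hc.
  assert (Hd : 0 <= dG c).
  { unfold dG.
    pose proof (deriv_nonneg mu c hmu ltac:(lra)) as K. fold r in K.
    pose proof (exp_pos (- r * ln c)).
    replace (mu * exp (- mu * c) * exp (- r * ln c) +
             (1 - exp (- mu * c)) * (exp (- r * ln c) * (- r * / c)))
      with (exp (- r * ln c) / c * (mu * c * exp (- mu * c) - r * (1 - exp (- mu * c))))
      by (field; lra).
    apply Rmult_le_pos; [|lra]. apply Rdiv_le_0_compat; lra. }
  assert (HG : G x <= G 1) by nra.
  unfold G in HG. rewrite ln_1, Rmult_0_r, exp_0, Rmult_1_r, Rmult_1_r in HG.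
  unfold Rpower.
  assert (E : exp (- r * ln x) * exp (r * ln x) = 1).
  { rewrite <- exp_plus. replace (- r * ln x + r * ln x) with 0 by ring. apply exp_0. }
  pose proof (exp_pos (r * ln x)).
  replace (1 - exp (- mu * x)) with ((1 - exp (- mu * x)) * exp (- r * ln x) * exp (r * ln x))
    by (rewrite Rmult_assoc, E; ring).
  apply Rmult_le_compat_r; lra.
Qed.
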